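(* Let $G$ be a group with generating set $S$ not containing the identity. Then every color-preserving automorphism of the Cayley color digraph of $G$ with respect to $S$ is an isometry of $G$ with respect to the cardinal metric $d_C$.
   Context: The cardinal norm is $\|x\| = \min\{|A| : A\subseteq S,\ x\in\langle A\rangle\}$, where $\langle A\rangle$ is the subgroup generated by $A$, and $d_C(g,h)=\|g^{-1}h\|$. The Cayley color digraph has vertex set $G$ and, for each $x\in G$ and $c\in S$, an arc $(x,xc)$ of color $c$. A color-preserving automorphism is a digraph automorphism $\alpha$ (bijection of $G$ with $(x,y)$ an arc iff $(\alpha(x),\alpha(y))$ is an arc) such that $(x,y)$ has color $c$ iff $(\alpha(x),\alpha(y))$ has color $c$. *)

(* Defs.v *)
From Stdlib Require Import List ClassicalEpsilon.
Import ListNotations.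
Set Implicit Arguments.

Section Group.
Variables (T : Type) (mul : T -> T -> T) (inv : T -> T) (e : T).

Definition is_group : Prop :=
  (forall x y z, mul x (mul y z) = mul (mul x y) z) /\
  (forall x, mul e x = x) /\
  (forall x, mul (inv x) x = e).

Inductive in_gen (A : T -> Prop) : T -> Prop :=
  | gen_one : in_gen A e
  | gen_base : forall a, A a -> in_gen A a
  | gen_mul : forall x y, in_gen A x -> in_gen A y -> in_gen A (mul x y)
  | gen_inv : forall x, in_gen A x -> in_gen A (inv x).

Definition generates (S : T -> Prop) : Prop := forall x, in_gen S x.

(* A finite subset A of S, represented by a duplicate-free list
   (so |A| = length A), with x in <A>. *)
Definition witnesses (S : T -> Prop) (x : T) (A : list T) : Prop :=
  NoDup A /\ (forall a, In a A -> S a) /\ in_gen (fun a => In a A) x.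

Definition is_card_norm (S : T -> Prop) (x : T) (n : nat) : Prop :=
  (exists A, witnesses S x A /\ length A = n) /\
  (forall A, witnesses S x A -> n <= length A).

Definition card_norm (S : T -> Prop) (x : T) : nat :=
  epsilon (inhabits 0) (is_card_norm S x).

Definition dC (S : T -> Prop) (g h : T) : nat := card_norm S (mul (inv g) h).

Definition colored_arc (S : T -> Prop) (x y c : T) : Prop := S c /\ y = mul x c.
Definition cayley_arc (S : T -> Prop) (x y : T) : Prop :=
  exists c, colored_arc S x y c.

Definition color_preserving_aut (S : T -> Prop) (alpha : T -> T) : Prop :=
  (exists beta : T -> T,
     (forall x, beta (alpha x) = x) /\ (forall y, alpha (beta y) = y)) /\
  (forall x y, cayley_arc S x y <-> cayley_arc S (alpha x) (alpha y)) /\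
  (forall x y c, colored_arc S x y c <-> colored_arc S (alpha x) (alpha y) c).

Definition isometry (S : T -> Prop) (alpha : T -> T) : Prop :=
  forall g h, dC S (alpha g) (alpha h) = dC S g h.
End Group.

(* Main.v *)
Require Import Defs.
From Stdlib Require Import List ClassicalEpsilon.

Theorem mainTheorem10 (T : Type) (mul : T -> T -> T) (inv : T -> T) (e : T)
  (HG : is_group mul inv e) (S : T -> Prop)
  (HS : generates mul inv e S) (He : ~ S e) (alpha : T -> T) :
  color_preserving_aut mul S alpha -> isometry mul inv e S alpha.
Proof.
  destruct HG as [As [Li Lv]].
  intros [_ [_ Hc]].
  assert (Rv : forall x, mul x (inv x) = e).
  { intro x. set (y := mul x (inv x)).
    assert (Hy : mul y y = y).
    { unfold y. rewrite <- As, (As (inv x) x), Lv, Li. reflexivity. }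
    rewrite <- (Li y). rewrite <- (Lv y) at 1. rewrite <- As, Hy. apply Lv. }
  assert (Ri : forall x, mul x e = x).
  { intro x. rewrite <- (Lv x), As, Rv. apply Li. }
  assert (Hs : forall x c, S c -> alpha (mul x c) = mul (alpha x) c).
  { intros x c Sc. assert (H : colored_arc mul S x (mul x c) c) by (split; auto).
    apply Hc in H. destruct H as [_ H]. exact H. }
  assert (Hinv : forall g, (forall x, alpha (mul x g) = mul (alpha x) g) ->
                  forall x, alpha (mul x (inv g)) = mul (alpha x) (inv g)).
  { intros g Hg x. set (y := mul x (inv g)).
    assert (E : alpha x = mul (alpha y) g).
    { rewrite <- Hg. unfold y. rewrite <- As, Lv, Ri. reflexivity. }
    rewrite E, <- As, Rv, Ri. reflexivity. }
  assert (Hall : forall g, in_gen mul inv e S g -> forall x, alpha (mul x g) = mul (alpha x) g).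
  { intros g Hg. induction Hg.
    - intro z. rewrite !Ri. reflexivity.
    - intro z. apply Hs; auto.
    - intro z. rewrite As, IHHg2, IHHg1, As. reflexivity.
    - apply Hinv; auto. }
  intros g h. unfold dC. f_equal.
  assert (E : h = mul g (mul (inv g) h)) by (rewrite As, Rv, Li; reflexivity).
  rewrite E at 1. rewrite Hall by apply HS.
  rewrite As, Lv, Li. reflexivity.
Qed.
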